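(* Let $(\mathcal M,X,\bot)$ be an accessible concurrent system. The following are equivalent: (1) the system is irreducible; (2) for some state $\alpha$ and some letter $a$, there exists an $a$-rooted linking execution from $\alpha$; (3) for every state $\alpha$ and every letter $a$, there exists an $a$-rooted linking execution from $\alpha$.
   Context: A trace monoid $\mathcal M=\mathcal M(\Sigma,I)$ is $\langle\Sigma\mid ab=ba\ ((a,b)\in I)\rangle$, $\Sigma$ finite, $I$ irreflexive symmetric; $D=(\Sigma\times\Sigma)\setminus I$; $\mathcal M$ is irreducible if $(\Sigma,D)$ is connected. A concurrent system $(\mathcal M,X,\bot)$: $X$ finite, $\bot\notin X$, right action of $\mathcal M$ on $X\cup\{\bot\}$ with $\bot\cdot x=\bot$. Accessible: for all $\alpha,\beta\in X$ some $x$ with $\alpha\cdot x=\beta$. Alive: for every $\alpha$ and $a\in\Sigma$ some $x$ containing $a$ with $\alpha\cdot x\ne\bot$. Irreducible: accessible, alive and $\mathcal M$ irreducible. A linking sequence from $\alpha$ is a sequence of letters $a_1,\dots,a_p$ such that, for some indices $1\le j_1<\dots<j_q\le p$: $\alpha\cdot(a_1\cdots a_p)\ne\bot$; $(a_{j_k},a_{j_{k+1}})\in D$ for $k=1,\dots,q-1$; and every letter of $\Sigma$ occurs in $(a_{j_1},\dots,a_{j_q})$. It is $a$-rooted if the indices can be chosen with $a_{j_1}=a$. A (resp. $a$-rooted) linking execution from $\alpha$ is the image in $\mathcal M$ of a (resp. $a$-rooted) linking sequence from $\alpha$. *)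

(* Defs.v *)
From mathcomp Require Import all_boot.
From Stdlib Require Import Relation_Operators.
Set Implicit Arguments. Unset Strict Implicit. Unset Printing Implicit Defensive.

Section Concurrent.
Variables (Sigma X : finType).

(* Independence relation I (irreflexive, symmetric, as hypotheses of the
   theorem) and dependence D = complement of I. *)
Definition dep (I : rel Sigma) : rel Sigma := fun a b => ~~ I a b.

(* Trace monoid M(Sigma, I): words modulo the congruence generated by
   ab = ba for (a,b) in I.  One elementary step swaps two adjacent
   independent letters. *)
Definition swap_step (I : rel Sigma) (s t : seq Sigma) : Prop :=
  exists u v a b, I a b /\ s = u ++ [:: a; b] ++ v /\ t = u ++ [:: b; a] ++ v.

Definition trace_eq (I : rel Sigma) : seq Sigma -> seq Sigma -> Prop :=
  clos_refl_sym_trans (seq Sigma) (swap_step I).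

Definition irreducible_monoid (I : rel Sigma) : Prop :=
  forall a b : Sigma, connect (dep I) a b.

(* A right action of M on X ∪ {⊥} with ⊥ absorbing: X ∪ {⊥} is option X
   (None = ⊥); the action is given on generators by act : X -> Sigma -> option X
   and extended to words by run; it is an action of M iff it respects the
   defining relations ab = ba for (a,b) in I (see act_compat). *)
Definition step (act : X -> Sigma -> option X) (o : option X) (a : Sigma)
  : option X := if o is Some x then act x a else None.

Definition run (act : X -> Sigma -> option X) (alpha : X) (w : seq Sigma)
  : option X := foldl (step act) (Some alpha) w.

Definition act_compat (I : rel Sigma) (act : X -> Sigma -> option X) : Prop :=
  forall (alpha : X) (a b : Sigma), I a b ->
    run act alpha [:: a; b] = run act alpha [:: b; a].

Definition accessible (act : X -> Sigma -> option X) : Prop :=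
  forall alpha beta : X, exists w : seq Sigma, run act alpha w = Some beta.

Definition alive (act : X -> Sigma -> option X) : Prop :=
  forall (alpha : X) (a : Sigma),
    exists w : seq Sigma, a \in w /\ run act alpha w <> None.

Definition irreducible_system (I : rel Sigma) (act : X -> Sigma -> option X)
  : Prop := [/\ accessible act, alive act & irreducible_monoid I].

(* Linking sequence from alpha: s with alpha·s <> ⊥ and a subsequence
   t = (a_{j_1},...,a_{j_q}) of s (chosen at increasing indices, i.e.
   subseq t s) whose consecutive letters are dependent and which contains
   every letter. *)
Definition linking_seq (I : rel Sigma) (act : X -> Sigma -> option X)
  (alpha : X) (s : seq Sigma) : Prop :=
  run act alpha s <> None /\
  exists t : seq Sigma, [/\ subseq t s, sorted (dep I) t & forall c, c \in t].

Definition rooted_linking_seq (I : rel Sigma) (act : X -> Sigma -> option X)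
  (alpha : X) (a : Sigma) (s : seq Sigma) : Prop :=
  run act alpha s <> None /\
  exists t : seq Sigma,
    [/\ subseq (a :: t) s, path (dep I) a t & forall c, c \in a :: t].

(* A (a-rooted) linking execution from alpha: a trace (represented by any
   word w of its class) which is the image of a (a-rooted) linking sequence. *)
Definition linking_execution (I : rel Sigma) (act : X -> Sigma -> option X)
  (alpha : X) (w : seq Sigma) : Prop :=
  exists s, linking_seq I act alpha s /\ trace_eq I s w.

Definition rooted_linking_execution (I : rel Sigma)
  (act : X -> Sigma -> option X) (alpha : X) (a : Sigma) (w : seq Sigma)
  : Prop :=
  exists s, rooted_linking_seq I act alpha a s /\ trace_eq I s w.

End Concurrent.

(* Main.v *)
Require Import Defs.
From mathcomp Require Import all_boot.
From Stdlib Require Import Relation_Operators.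
Set Implicit Arguments. Unset Strict Implicit. Unset Printing Implicit Defensive.

Section H.
Variables (Sigma X : finType).
Implicit Types (act : X -> Sigma -> option X).

Lemma foldl_none act v : foldl (step act) None v = None.
Proof. by elim: v. Qed.

Lemma run_cat act alpha u v :
  run act alpha (u ++ v) =
  if run act alpha u is Some b then run act b v else None.
Proof.
rewrite /run foldl_cat; case: (foldl _ _ u) => [b|] //; exact: foldl_none.
Qed.

Lemma build act : alive act -> forall l alpha,
  exists s, subseq l s /\ run act alpha s <> None.
Proof.
move=> Hal; elim=> [|c l IH] alpha.
  by exists [::]; split => //.
have [w [cw Hw]] := Hal alpha c.
case Ew: (run act alpha w) => [beta|] //.
have [s' [Hs' Hr]] := IH beta.
exists (w ++ s'); split.
  by rewrite -cat1s; apply: cat_subseq => //; rewrite sub1seq.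
by rewrite run_cat Ew.
Qed.

Lemma walk (I : rel Sigma) : irreducible_monoid I -> forall (L : seq Sigma) a,
  exists t, path (dep I) a t /\ {subset L <= a :: t}.
Proof.
move=> Hirr; elim=> [|c L IH] a.
  by exists [::]; split => //.
have /connectP [p Hp Hl] := Hirr a c.
have [t' [Ht' Hsub]] := IH c.
exists (p ++ t'); split.
  by rewrite cat_path Hp -Hl.
move=> x; rewrite inE => /orP [/eqP ->|xL].
  by rewrite Hl -cat_cons mem_cat mem_last.
move: (Hsub x xL); rewrite inE => /orP [/eqP ->|xt].
  by rewrite Hl -cat_cons mem_cat mem_last.
by rewrite -cat_cons mem_cat xt orbT.
Qed.

Lemma path_connect (I : rel Sigma) : forall t a x,
  path (dep I) a t -> x \in a :: t -> connect (dep I) a x.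
Proof.
elim=> [|b t IH] a x /=.
  by move=> _; rewrite inE => /eqP ->; exact: connect0.
move=> /andP [ab Hp]; rewrite inE => /orP [/eqP ->|xt]; first exact: connect0.
apply: connect_trans (connect1 ab) _; exact: IH.
Qed.

End H.

Theorem proposition9 (Sigma X : finType) (I : rel Sigma)
  (I_irr : irreflexive I) (I_sym : symmetric I)
  (Sigma_ne : inhabited Sigma) (X_ne : inhabited X)
  (act : X -> Sigma -> option X) (Hact : act_compat I act)
  (Hacc : accessible act) :
  [<-> irreducible_system I act;
       exists (alpha : X) (a : Sigma) (w : seq Sigma),
         rooted_linking_execution I act alpha a w;
       forall (alpha : X) (a : Sigma), exists w : seq Sigma,
         rooted_linking_execution I act alpha a w].
Proof.
have to3 : irreducible_system I act -> forall (alpha : X) (a : Sigma),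
    exists w : seq Sigma, rooted_linking_execution I act alpha a w.
  case=> _ Hal Hirr alpha a.
  have [t [Ht Hsub]] := walk Hirr (enum Sigma) a.
  have [s [Hs Hr]] := build Hal (a :: t) alpha.
  exists s; exists s; split; last exact: rst_refl.
  split => //; exists t; split => // c; apply: Hsub; by rewrite mem_enum.
have to1 : (exists (alpha : X) (a : Sigma) (w : seq Sigma),
         rooted_linking_execution I act alpha a w) -> irreducible_system I act.
  case=> alpha [a [w [s [[Hr [t [Hsub Hp Hall]]] _]]]].
  split => //.
  - move=> beta c; have [u Hu] := Hacc beta alpha.
    exists (u ++ s); split.
      by rewrite mem_cat (mem_subseq Hsub (Hall c)) orbT.
    by rewrite run_cat Hu.
  - move=> c d.
    have Hs : connect_sym (dep I).
      by apply: sym_connect_sym => x y; rewrite /dep I_sym.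
    apply: (@connect_trans _ _ a).
      by rewrite Hs; exact: (path_connect Hp (Hall c)).
    exact: (path_connect Hp (Hall d)).
tfae.
- move=> H; case: X_ne => x0; case: Sigma_ne => a0.
  have [w Hw] := to3 H x0 a0; by exists x0, a0, w.
- by move=> H; apply: to3; apply: to1.
- move=> H; case: X_ne => x0; case: Sigma_ne => a0.
  have [w Hw] := H x0 a0; apply: to1; by exists x0, a0, w.
Qed.
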